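(* Assume the setting in the context, with $\epsilon \in (0,1)$, $\delta = \bigl(1 + \frac{k+3}{2\epsilon}\bigr)^{-1}$, $S_{\mathrm{init}} = \{e^*\}$ with $e^* \in \arg\max_{e \in \mathcal{G}} f(\{e\})$, $f(S_{\mathrm{init}})>0$, and $\alpha = f(S_{\mathrm{init}})\delta/n$. Consider any sequence of improvement steps starting from $S_0 = S_{\mathrm{init}}$ and an arbitrary total order $\prec_0$, where step $j$ picks a $k$-replacement $(A,B)$ for $S_j$ with $\sum_{a \in A} w_{(A,B)}(a)^2 > \sum_{b \in B} w(b)^2$ (weights computed for $S_j$ with respect to $\prec_j$), sets $S_{j+1} = (S_j \setminus B) \cup A$, and sets $\prec_{j+1}$ to be an order in which all elements of $S_j \setminus B$ precede all elements of $A$ and which agrees with $\prec_j$ within $S_j\setminus B$ and within $A$. Then the number of improvement steps is at most $n^3\delta^{-2} = n^3\bigl(1 + \frac{k+3}{2\epsilon}\bigr)^2$; in particular, for fixed $k$, it is $O(n^3\epsilon^{-2})$.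
   Context: Setting. $\mathcal{G}$ is a finite ground set with $|\mathcal{G}| = n$, $f : 2^{\mathcal{G}} \to \mathbb{R}_{\ge 0}$ is a nonnegative monotone submodular function, and $\mathcal{I} \subseteq 2^{\mathcal{G}}$ is a nonempty downward-closed family containing all singletons; $k\ge 1$ is an integer. Weights. For $S \in \mathcal{I}$ and a total order $\prec$, with $S = \{s_1 \prec \dots \prec s_m\}$ and $S_i = \{s_1,\dots,s_i\}$, define $w(s_i) = \lfloor (f(S_{i-1} \cup \{s_i\}) - f(S_{i-1}))/\alpha \rfloor \alpha$. A $k$-replacement for $S$ is a pair $(A,B)$ with $B \subseteq S$, $A \subseteq \mathcal{G} \setminus (S \setminus B)$, $|A| \le k$, $|B| \le k^2 - k + 1$, and $(S \setminus B) \cup A \in \mathcal{I}$. For such a pair, write $A = \{a_1 \prec \dots \prec a_r\}$, $A_i = \{a_1,\dots,a_i\}$, and define $w_{(A,B)}(a_i) = \lfloor (f((S\setminus B) \cup A_{i-1} \cup \{a_i\}) - f((S\setminus B)\cup A_{i-1}))/\alpha \rfloor \alpha$. *)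

(* Defs.v *)
From HB Require Import structures.
From mathcomp Require Import all_boot all_order all_algebra.
Set Implicit Arguments. Unset Strict Implicit. Unset Printing Implicit Defensive.
Import Order.TTheory GRing.Theory Num.Theory.
Local Open Scope ring_scope.

(* A total order on the ground set G is represented by an injective rank
   function r : G -> nat, with x ≺ y  iff  r x < r y. *)

Section Defs.
Variables (R : archiRealFieldType) (G : finType).

Definition round_down (alpha x : R) : R := (Num.floor (x / alpha))%:~R * alpha.

Definition pred_in (r : G -> nat) (X : {set G}) (x : G) : {set G} :=
  [set y in X | (r y < r x)%N].

Definition weight (f : {set G} -> R) (alpha : R) (r : G -> nat)
    (S : {set G}) (s : G) : R :=
  round_down alpha (f (pred_in r S s :|: [set s]) - f (pred_in r S s)).

Definition weightAB (f : {set G} -> R) (alpha : R) (r : G -> nat)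
    (S A B : {set G}) (a : G) : R :=
  round_down alpha (f ((S :\: B) :|: pred_in r A a :|: [set a])
                    - f ((S :\: B) :|: pred_in r A a)).

Definition k_replacement (I : {set {set G}}) (k : nat) (S A B : {set G}) : Prop :=
  [/\ B \subset S, A \subset ~: (S :\: B), (#|A| <= k)%N,
      (#|B| <= k ^ 2 - k + 1)%N & (S :\: B) :|: A \in I].

Definition monotone_fn (f : {set G} -> R) : Prop :=
  forall X Y : {set G}, X \subset Y -> f X <= f Y.

Definition submodular_fn (f : {set G} -> R) : Prop :=
  forall X Y : {set G}, f (X :|: Y) + f (X :&: Y) <= f X + f Y.

Definition down_closed (I : {set {set G}}) : Prop :=
  forall X Y : {set G}, Y \in I -> X \subset Y -> X \in I.

End Defs.

(* Main.v *)
Require Import Defs.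
From HB Require Import structures.
From mathcomp Require Import all_boot all_order all_algebra.
From mathcomp Require Import ring lra zify.
Import Order.TTheory GRing.Theory Num.Theory.
Local Open Scope ring_scope.

Section Helpers.
Variables (R : archiRealFieldType) (G : finType).

Lemma rd_ge0 (alpha x : R) : 0 < alpha -> 0 <= x -> 0 <= round_down alpha x.
Proof.
move=> ha hx; rewrite /round_down mulr_ge0 ?(ltW ha) // ler0z floor_ge0.
by rewrite divr_ge0 // ltW.
Qed.

Lemma rd_le (alpha x : R) : 0 < alpha -> round_down alpha x <= x.
Proof.
move=> ha; rewrite /round_down -ler_pdivlMr //; exact: floor_le.
Qed.

Lemma rd_mono (alpha x y : R) : 0 < alpha -> x <= y ->
  round_down alpha x <= round_down alpha y.
Proof.
move=> ha hxy; rewrite /round_down ler_pM2r // ler_int; apply: le_floor.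
by rewrite ler_pM2r // invr_gt0.
Qed.

Lemma marg_anti (f : {set G} -> R) (X Y : {set G}) (s : G) :
  monotone_fn f -> submodular_fn f -> X \subset Y ->
  f (Y :|: [set s]) - f Y <= f (X :|: [set s]) - f X.
Proof.
move=> mon sub hXY.
have [sY|sY] := boolP (s \in Y).
  have -> : Y :|: [set s] = Y by apply/setUidPl; rewrite sub1set.
  by rewrite subrr subr_ge0; apply: mon; apply: subsetUl.
have h := sub (X :|: [set s]) Y.
have e1 : X :|: [set s] :|: Y = Y :|: [set s].
  by rewrite setUAC (setUidPr hXY) setUC.
have e2 : (X :|: [set s]) :&: Y = X.
  rewrite setIUl (setIidPl hXY); apply/setUidPl.
  apply/subsetP=> z; rewrite !inE => /andP[/eqP -> ].
  by rewrite (negbTE sY).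
rewrite e1 e2 in h; lra.
Qed.

Lemma sq_le (a b : R) : 0 <= a -> a <= b -> a ^+ 2 <= b ^+ 2.
Proof. by move=> ha hab; rewrite ler_pXn2r // ?nnegrE // (le_trans ha). Qed.

Lemma rd_sq (alpha x : R) :
  round_down alpha x ^+ 2 = ((Num.floor (x / alpha)) ^+ 2)%:~R * alpha ^+ 2.
Proof. by rewrite /round_down exprMn rmorphXn. Qed.

Lemma sumw_int (f : {set G} -> R) alpha r (S X : {set G}) :
  \sum_(s in X) weight f alpha r S s ^+ 2 =
  (\sum_(s in X) (Num.floor ((f (pred_in r S s :|: [set s]) - f (pred_in r S s)) / alpha)) ^+ 2)%:~R * alpha ^+ 2.
Proof. by rewrite rmorph_sum mulr_suml; apply: eq_bigr => s _; rewrite /weight rd_sq. Qed.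

Lemma sumwAB_int (f : {set G} -> R) alpha r (S A B X : {set G}) :
  \sum_(s in X) weightAB f alpha r S A B s ^+ 2 =
  (\sum_(s in X) (Num.floor ((f ((S :\: B) :|: pred_in r A s :|: [set s])
                    - f ((S :\: B) :|: pred_in r A s)) / alpha)) ^+ 2)%:~R * alpha ^+ 2.
Proof. by rewrite rmorph_sum mulr_suml; apply: eq_bigr => s _; rewrite /weightAB rd_sq. Qed.

Lemma int_step (a : R) (zB zA : int) : 0 < a ->
  zB%:~R * a < zA%:~R * a -> zB%:~R * a + a <= zA%:~R * a.
Proof.
move=> ha; rewrite ltr_pM2r // ltr_int => h.
have h1 : zB + 1 <= zA by lia.
have := h1; rewrite -(ler_int R) -(ler_pM2r ha) intrD mulrDl mul1r; by [].
Qed.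

Lemma sq_lem (x y z : R) : z != 0 -> (x * y / z) ^+ 2 * z ^+ 2 = x ^+ 2 * y ^+ 2.
Proof. by move=> hz; field. Qed.

End Helpers.

Theorem mainTheorem5 (R : archiRealFieldType) (G : finType)
  (f : {set G} -> R) (I : {set {set G}}) (k : nat) (eps : R) (estar : G)
  (Sq : nat -> {set G}) (r : nat -> G -> nat) (A B : nat -> {set G}) (m : nat) :
  (forall X, 0 <= f X) -> monotone_fn f -> submodular_fn f ->
  I != set0 -> down_closed I -> (forall x : G, [set x] \in I) ->
  (1 <= k)%N ->
  0 < eps -> eps < 1 ->
  (forall e : G, f [set e] <= f [set estar]) ->
  0 < f [set estar] ->
  let n : R := (#|G|)%:R in
  let delta : R := (1 + (k%:R + 3) / (2 * eps))^-1 in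
  let alpha : R := f [set estar] * delta / n in
  Sq 0%N = [set estar] ->
  (forall j : nat, (j <= m)%N -> injective (r j)) ->
  (forall j : nat, (j < m)%N ->
     k_replacement I k (Sq j) (A j) (B j) /\
     \sum_(b in B j) (weight f alpha (r j) (Sq j) b) ^+ 2
       < \sum_(a in A j) (weightAB f alpha (r j) (Sq j) (A j) (B j) a) ^+ 2 /\
     Sq j.+1 = (Sq j :\: B j) :|: A j /\
     (forall x y, x \in Sq j :\: B j -> y \in A j -> (r j.+1 x < r j.+1 y)%N) /\
     (forall x y, x \in Sq j :\: B j -> y \in Sq j :\: B j ->
        (r j.+1 x < r j.+1 y)%N = (r j x < r j y)%N) /\
     (forall x y, x \in A j -> y \in A j ->
        (r j.+1 x < r j.+1 y)%N = (r j x < r j y)%N)) ->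
  m%:R <= n ^+ 3 * delta ^- 2.
Proof.
move=> f0 mon sub _ _ _ k1 e0 e1 fmax fpos n delta alpha S0 _ step.
set fs := f [set estar].
have n0 : 0 < n by rewrite /n ltr0n; apply/card_gt0P; exists estar.
have d0 : 0 < delta.
  rewrite /delta invr_gt0; apply: ltr_wpDr => //.
  by rewrite divr_ge0 // ?mulr_ge0 // ?(ltW e0) // addr_ge0.
have a0 : 0 < alpha by rewrite /alpha !mulr_gt0 // invr_gt0.
have marg0 : forall X s, 0 <= f (X :|: [set s]) - f X.
  by move=> X s; rewrite subr_ge0; apply: mon; apply: subsetUl.
have wge0 : forall j s, 0 <= weight f alpha (r j) (Sq j) s.
  by move=> j s; apply: rd_ge0.
pose Phi j := \sum_(s in Sq j) weight f alpha (r j) (Sq j) s ^+ 2.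
have up : forall j, Phi j <= n * fs ^+ 2.
  move=> j; apply: (@le_trans _ _ (\sum_(s in Sq j) fs ^+ 2)).
    apply: ler_sum => s _; apply: sq_le => //.
    rewrite /weight; apply: le_trans (rd_le _ _ _ a0) _.
    set P := pred_in _ _ _.
    apply: (@le_trans _ _ (f [set s])) => //.
    have h := sub P [set s]; have := f0 (P :&: [set s]); lra.
  rewrite sumr_const -mulr_natl ler_wpM2r ?sqr_ge0 // /n ler_nat.
  exact: max_card.
have st : forall j, (j < m)%N -> Phi j + alpha ^+ 2 <= Phi j.+1.
  move=> j jm; have [[hBS hAS _ _ _] [hlt [hS [hord [hord1 hord2]]]]] := step j jm.
  have dAD : [disjoint Sq j :\: B j & A j].
    rewrite disjoint_sym disjoints_subset; exact: hAS.
  have eS : Sq j = (Sq j :\: B j) :|: B j.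
    apply/setP=> y; rewrite !inE; case yB: (y \in B j) => /=; rewrite ?andbT ?orbT ?orbF //.
    by apply: (subsetP hBS).
  have dDB : [disjoint Sq j :\: B j & B j].
    by rewrite disjoint_sym disjoints_subset setCD subsetUr.
  pose wO := fun s => weight f alpha (r j) (Sq j) s ^+ 2.
  pose wN := fun s => weight f alpha (r j.+1) (Sq j.+1) s ^+ 2.
  have E1 : Phi j = \sum_(s in Sq j :\: B j) wO s + \sum_(s in B j) wO s.
    transitivity (\sum_(s in [predU (Sq j :\: B j) & B j]) wO s); last by rewrite bigU.
    by apply: eq_bigl => s; rewrite {1}eS !inE.
  have E2 : Phi j.+1 = \sum_(s in Sq j :\: B j) wN s + \sum_(s in A j) wN s.
    transitivity (\sum_(s in [predU (Sq j :\: B j) & A j]) wN s); last by rewrite bigU.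
    by apply: eq_bigl => s; rewrite hS !inE.
  have H1 : \sum_(s in Sq j :\: B j) wO s <= \sum_(s in Sq j :\: B j) wN s.
    apply: ler_sum => s sD; apply: sq_le; first exact: wge0.
    rewrite /weight; apply: rd_mono => //; apply: marg_anti => //.
    apply/subsetP=> y; rewrite /pred_in inE => /andP[]; rewrite hS in_setU => /orP[yD|yA] lt; rewrite inE.
      by rewrite -(hord1 y s yD sD) lt andbT; move: yD; rewrite inE => /andP[].
    by have := hord s y sD yA; rewrite ltnNge (ltnW lt).
  have H2 : \sum_(s in A j) wN s =
            \sum_(a in A j) (weightAB f alpha (r j) (Sq j) (A j) (B j) a) ^+ 2.
    apply: eq_bigr => a aA; rewrite /wN.
    have eP : pred_in (r j.+1) (Sq j.+1) a = (Sq j :\: B j) :|: pred_in (r j) (A j) a.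
      apply/setP=> y; rewrite /pred_in inE hS in_setU in_setU inE.
      case yD: (y \in Sq j :\: B j) => /=; first by rewrite (hord y a).
      case yA: (y \in A j) => //=; exact: hord2.
    rewrite /weight eP.
    by [].
  have H3 := hlt.
  rewrite sumw_int sumwAB_int in H3.
  have H4 := int_step _ _ _ _ (exprn_gt0 2 a0) H3.
  rewrite -sumw_int -sumwAB_int in H4.
  rewrite E1 E2 H2; rewrite /wO; lra.
have ind : forall j, (j <= m)%N -> j%:R * alpha ^+ 2 <= Phi j.
  elim=> [_|j IH jm]; first by rewrite mul0r /Phi sumr_ge0 // => s _; rewrite sqr_ge0.
  have := IH (ltnW jm); have := st j jm; rewrite mulrSr mulrDl mul1r; lra.
have h := le_trans (ind m (leqnn m)) (up m).
have e : alpha ^+ 2 * n ^+ 2 = fs ^+ 2 * delta ^+ 2.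
  exact: sq_lem (lt0r_neq0 n0).
have fs0 : 0 < fs ^+ 2 by rewrite exprn_gt0.
rewrite ler_pdivlMr ?exprn_gt0 // -(ler_pM2r fs0).
have := ler_wpM2r (ltW (exprn_gt0 2 n0)) h.
rewrite -mulrA e.
have -> : m%:R * delta ^+ 2 * fs ^+ 2 = m%:R * (fs ^+ 2 * delta ^+ 2) by ring.
have -> : n * fs ^+ 2 * n ^+ 2 = n ^+ 3 * fs ^+ 2 by ring.
by [].
Qed.
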